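(* Let $c$ be a cost function on $(\mathbb{R}^n)^N$, $\alpha_1,\dots,\alpha_N>0$, and $m_1,\dots,m_N$ measures on $\mathbb{R}^n$. Let $(V_1,\dots,V_N)$ be an admissible tuple with $0<\int e^{-\alpha_iV_i}dm_i<\infty$ for all $i$, and let $\nu_i=e^{-\alpha_iV_i}m_i/\int e^{-\alpha_iV_i}dm_i$. Assume that the Kantorovich duality holds for $(c;\nu_1,\dots,\nu_N)$, with optimal plan $\gamma$ and dual minimizer $(\Phi_1,\dots,\Phi_N)$. Then $$\prod_{i=1}^N\Bigl(\int e^{-\alpha_iV_i}dm_i\Bigr)^{1/\alpha_i}\le\prod_{i=1}^N\Bigl(\int e^{-\alpha_i\Phi_i}dm_i\Bigr)^{1/\alpha_i}.$$
   Context: Points of $(\mathbb{R}^n)^N$ are written $x=(x_1,\dots,x_N)$, $x_i\in\mathbb{R}^n$. A tuple $(V_1,\dots,V_N)$ of functions $V_i:\mathbb{R}^n\to(-\infty,+\infty]$ is admissible (for the cost $c$) if $\sum_{i=1}^N V_i(x_i)\ge c(x)$ for all $x$. Kantorovich duality: for probability measures $\mu_1,\dots,\mu_N$ on $\mathbb{R}^n$, the primal problem is to maximize $\int c\,d\pi$ over probability measures $\pi$ on $(\mathbb{R}^n)^N$ with $i$-th marginal $\mu_i$ for all $i$; the dual problem is to minimize $\sum_i\int f_i\,d\mu_i$ over admissible tuples $(f_i)$ with $f_i\in L^1(\mu_i)$. We say the Kantorovich duality holds for $(c;\mu_1,\dots,\mu_N)$ if the primal problem has a maximizer, the dual problem has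 a minimizer, and the two optimal values are equal and finite. *)

(* Defs.v *)
From HB Require Import structures.
From mathcomp Require Import all_boot all_order all_algebra.
From mathcomp Require Import all_classical all_reals all_analysis.
From mathcomp Require Import measurable_realfun.
Set Implicit Arguments. Unset Strict Implicit. Unset Printing Implicit Defensive.
Import Order.TTheory GRing.Theory Num.Theory.
Local Open Scope classical_set_scope.
Local Open Scope ring_scope.
Local Open Scope ereal_scope.

(* Points of (R^n)^N are modelled as N.-tuple (n.-tuple R), with the product
   (Borel) sigma-algebras provided by MathComp-Analysis for tuples.
   The i-th coordinate x_i of x is [tnth x i]. *)

Section Kantorovich.
Context {R : realType} {d : measure_display} {T : measurableType d} {N : nat}.

Definition admissible (c : N.-tuple T -> \bar R) (V : 'I_N -> T -> \bar R) :=
  (forall i y, V i y != -oo) /\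
  (forall x : N.-tuple T, c x <= \sum_(i < N) V i (tnth x i)).

Definition has_marginals (pi : probability (N.-tuple T) R)
    (mu : 'I_N -> probability T R) :=
  forall (i : 'I_N) (A : set T), measurable A ->
    pi ((fun x : N.-tuple T => tnth x i) @^-1` A) = mu i A.

Definition dual_feasible (c : N.-tuple T -> \bar R)
    (mu : 'I_N -> probability T R) (f : 'I_N -> T -> \bar R) :=
  admissible c f /\ (forall i, (mu i).-integrable setT (f i)).

Definition dual_value (mu : 'I_N -> probability T R) (f : 'I_N -> T -> \bar R) :=
  \sum_(i < N) \int[mu i]_x f i x.

Definition kantorovich_duality_with (c : N.-tuple T -> \bar R)
    (mu : 'I_N -> probability T R) (gamma : probability (N.-tuple T) R)
    (Phi : 'I_N -> T -> \bar R) :=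
  [/\ (has_marginals gamma mu /\
      (forall pi : probability (N.-tuple T) R, has_marginals pi mu ->
         \int[pi]_x c x <= \int[gamma]_x c x)),
      dual_feasible c mu Phi,
      (forall f, dual_feasible c mu f -> dual_value mu Phi <= dual_value mu f),
      \int[gamma]_x c x = dual_value mu Phi &
      \int[gamma]_x c x \is a fin_num].

Definition kantorovich_duality_holds (c : N.-tuple T -> \bar R)
    (mu : 'I_N -> probability T R) :=
  exists gamma Phi, kantorovich_duality_with c mu gamma Phi.

End Kantorovich.

Definition gibbs_mass {R : realType} {d : measure_display} {T : measurableType d}
  (m : {measure set T -> \bar R}) (a : R) (V : T -> \bar R) : \bar R :=
  \int[m]_x expeR (- a%:E * V x).

(* Main.v *)
Require Import Defs.
From HB Require Import structures.
From mathcomp Require Import all_boot all_order all_algebra.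
From mathcomp Require Import all_classical all_reals all_analysis.
From mathcomp Require Import measurable_realfun lra ring.
Import Order.TTheory GRing.Theory Num.Theory.
Local Open Scope classical_set_scope.
Local Open Scope ring_scope.
Local Open Scope ereal_scope.
Import HBNNSimple.
Lemma measurable_expeR (R : realType) : measurable_fun [set: \bar R] (@expeR R).
Proof.
have -> : @expeR R = fun x => if x \is a fin_num then (expR (fine x))%:E
                              else maxe x 0.
  apply: boolp.funext => -[r| |] //=.
  by rewrite maxEle leNye.
apply: measurable_fun_ifT => //=.
+ by apply: (measurable_fun_bool true); exact/emeasurable_fin_num.
+ by apply/measurable_EFinP/measurableT_comp => //; exact: measurable_expR.
+ by apply: measurable_maxe.
Qed.
Lemma dens_change d (T : measurableType d) (R : realType)
  (m nu : {measure set T -> \bar R}) (g : T -> \bar R) :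
  measurable_fun setT g -> (forall x, 0 <= g x) -> (forall x, g x \is a fin_num) ->
  (forall A, measurable A -> nu A = \int[m]_(x in A) g x) ->
  forall f, measurable_fun setT f -> (forall x, 0 <= f x) ->
  \int[nu]_x f x = \int[m]_x (f x * g x).
Proof.
move=> mg g0 gfin nuE f mf f0.
set E := [set: T]; have mE : measurable E by exact: measurableT.
pose h := nnsfun_approx mE mf.
have -> : \int[nu]_(x in E) f x =
    lim (\int[nu]_(x in E) (EFin \o h n) x @[n --> \oo]).
  have fE x : f x = lim ((EFin \o h n) x @[n --> \oo]).
    by apply/esym/cvg_lim => //; exact: cvg_nnsfun_approx.
  under eq_integral => x _ do rewrite fE.
  apply: monotone_convergence => //.
  - move=> n; apply/measurable_EFinP.
    by apply: (measurable_funS measurableT) => //; exact/measurable_funP.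
  - by move=> n x Ex //=; rewrite lee_fin.
  - by move=> x Ex a b ab; rewrite lee_fin; exact/lefP/nd_nnsfun_approx.
have -> : \int[m]_(x in E) (f \* g) x =
    lim (\int[m]_(x in E) ((EFin \o h n) \* g) x @[n --> \oo]).
  have fg x : f x * g x = lim (((EFin \o h n) \* g) x @[n --> \oo]).
    by apply/esym/cvg_lim => //; apply: cvgeZr;
      [exact: gfin|exact: cvg_nnsfun_approx].
  under eq_integral => x _ do rewrite fg.
  apply: monotone_convergence => [//| | |].
  - move=> n; apply/emeasurable_funM => //; apply/measurable_funTS.
      exact/measurable_EFinP.
  - by move=> n x Ex /=; rewrite mule_ge0 ?lee_fin.
  - by move=> x Ex a b ab/=; rewrite lee_wpmul2r ?lee_fin//; exact/lefP/nd_nnsfun_approx.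
suff suf n : \int[m]_(x in E) ((EFin \o h n) x * g x) =
    \int[nu]_(x in E) (EFin \o h n) x.
  suff -> : (fun n => \int[nu]_(x in E) (EFin \o h n) x) = (fun n => \int[m]_(x in E) ((EFin \o h n) x * g x)) by []. by apply: boolp.funext => k; rewrite suf.
transitivity (\int[nu]_(x in E)
   (\sum_(y \in range (h n)) (y * \1_(h n @^-1` [set y]) x)%:E)); last first.
  by apply: eq_integral => t tE; rewrite /= fimfunE -fsumEFin.
have indich k r : measurable_fun E (fun x => (r * \1_(h k @^-1` [set r]) x)%:E).
  by apply: (measurable_comp measurableT) => //; exact: measurable_funM.
rewrite ge0_integral_fsum//; last by move=> k y Ey; exact: nnfun_muleindic_ge0.
transitivity (\int[m]_(x in E) (\sum_(y \in range (h n))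
    (y * \1_(h n @^-1` [set y]) x)%:E * g x)).
  under [RHS]eq_integral => x xE.
    rewrite -ge0_mule_fsuml => [|y]; last exact: nnfun_muleindic_ge0.
    rewrite fsumEFin // -(fimfunE _ x); over.
  by [].
rewrite ge0_integral_fsum//; last 2 first.
  - by move=> y; apply: emeasurable_funM => //.
  - by move=> k y Ey; rewrite mule_ge0 // nnfun_muleindic_ge0.
apply: eq_fsbigr => r rhn.
under [RHS]eq_integral do rewrite EFinM.
rewrite integralZl_indic_nnsfun => //.
under eq_integral do rewrite EFinM -muleA.
rewrite ge0_integralZl//.
- under eq_integral do rewrite muleC.
  rewrite (eq_integral (g \_ (h n @^-1` [set r]))); last first.
    by move=> x xE; rewrite epatch_indic.
  by rewrite -integral_mkcondr -nuE// integral_indic// setIC.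
- apply: emeasurable_funM; first exact/measurable_EFinP.
  exact/measurable_funTS.
- by move=> t Et; rewrite mule_ge0 ?lee_fin.
- by move: rhn; rewrite inE => -[t _ <-]; rewrite lee_fin.
Qed.
Section marg.
Context (R : realType) d (T : measurableType d) (N : nat)
  (gamma : probability (N.-tuple T) R) (mu : probability T R) (i : 'I_N)
  (hm : forall A, measurable A -> gamma ((fun x : N.-tuple T => tnth x i) @^-1` A) = mu A).

Let pr := (fun x : N.-tuple T => tnth x i).
Let mpr : measurable_fun setT pr. Proof. exact: measurable_tnth. Qed.

Let hpush : forall A, measurable A -> A `<=` setT ->
  mu A = pushforward gamma pr A.
Proof. by move=> A mA _; rewrite /pushforward hm. Qed.

Lemma marg_ge0 (f : T -> \bar R) : measurable_fun setT f -> (forall x, 0 <= f x) ->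
  \int[gamma]_x f (tnth x i) = \int[mu]_x f x.
Proof.
move=> mf f0.
rewrite (eq_measure_integral _ hpush).
by rewrite ge0_integral_pushforward // preimage_setT.
Qed.

Lemma marg_int (f : T -> \bar R) : mu.-integrable setT f ->
  gamma.-integrable setT (fun x => f (tnth x i)).
Proof.
move=> /integrableP [mf fi]; apply/integrableP; split.
  by apply: measurableT_comp => //.
rewrite (@marg_ge0 (abse \o f)) //.
  exact: measurableT_comp.
by move=> x; exact: abse_ge0.
Qed.

Lemma marg_integral (f : T -> \bar R) : mu.-integrable setT f ->
  \int[gamma]_x f (tnth x i) = \int[mu]_x f x.
Proof.
move=> fi.
rewrite (eq_measure_integral _ hpush).
rewrite integral_pushforward //.
- by case/integrableP: fi.
- by rewrite preimage_setT; exact: marg_int.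
Qed.

Lemma marg_ae (P : T -> Prop) : {ae mu, forall x, P x} ->
  {ae gamma, forall x, P (tnth x i)}.
Proof.
case=> A [mA muA sA]; exists (pr @^-1` A); split.
- by rewrite -[X in measurable X]setTI; exact: mpr.
- by rewrite hm.
- by move=> x /= nPx; apply: sA.
Qed.
End marg.
Lemma ae_le_of_int d (T : measurableType d) (R : realType)
  (mu : {measure set T -> \bar R}) (S c : T -> \bar R) :
  mu.-integrable setT S -> measurable_fun setT c ->
  (forall x, c x <= S x) -> \int[mu]_x c x = \int[mu]_x S x ->
  {ae mu, forall x, S x <= c x}.
Proof.
move=> iS mc cS ecS.
have Sfin : \int[mu]_x S x \is a fin_num by exact: integrable_fin_num.
have posfin : \int[mu]_x c^\+ x < +oo.
  apply: (le_lt_trans _ (integral_funepos_lt_pinfty measurableT iS)).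
  apply: ge0_le_integral => //; first exact: measurable_funepos.
  - by apply: measurable_funepos; case/integrableP: iS.
  - by move=> x _; apply: (@funepos_le _ _ setT); [move=> y _; exact: cS|rewrite inE].
have pos0 : 0 <= \int[mu]_x c^\+ x by apply: integral_ge0 => x _; exact: funepos_ge0.
have neg0 : 0 <= \int[mu]_x c^\- x by apply: integral_ge0 => x _; exact: funeneg_ge0.
have negfin : \int[mu]_x c^\- x < +oo.
  have := Sfin; rewrite -ecS integralE => Sf.
  move: Sf posfin pos0 neg0.
  generalize (\int[mu]_x c^\+ x) (\int[mu]_x c^\- x) => P Q.
  by case: P => [r| |]; case: Q => [s| |] //=; rewrite ?ltry.
have ic : mu.-integrable setT c.
  apply/integrableP; split => //.
  rewrite -[X in \int[mu]_x X x]/(abse \o c) fune_abse ge0_integralD //.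
  - by rewrite lte_add_pinfty.
  - exact: measurable_funepos.
  - exact: measurable_funeneg.
have ih : mu.-integrable setT (S \- c) by exact: integrableB.
have Sfa := integrable_ae measurableT iS.
have mS : measurable_fun setT S by case/integrableP: iS.
have mSc : measurable_fun setT (S \- c) by exact: emeasurable_funB.
have h0 : \int[mu]_x `|(S \- c) x| = 0.
  rewrite (@ae_eq_integral _ _ _ mu setT (S \- c)) //.
  - by rewrite integralB // ecS subee.
  - exact: measurableT_comp.
  - apply: filterS Sfa => x /(_ I) Sx _.
    by rewrite gee0_abs // subre_ge0 //; exact: cS.
have := (ae_eq_integral_abs mu measurableT mSc).1 h0.
apply: filterS2 Sfa => x /(_ I) Sx /(_ I) /=.
move: (cS x) Sx; case: (S x) => [s| |] //; case: (c x) => [r| |] //=.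
move=> _ _ /eqP; rewrite eqe subr_eq0 => /eqP ->; exact: lexx.
Qed.
Lemma pointwise_ineq (R : realType) N (alpha cc : 'I_N -> R) (phi v : 'I_N -> \bar R) :
  (forall i, 0 < alpha i)%R -> (forall i, phi i \is a fin_num) -> (forall i, v i != -oo) ->
  \sum_(i < N) phi i <= \sum_(i < N) v i ->
  ((\sum_(i < N) (alpha i)^-1 - \sum_(i < N) cc i)%R)%:E <=
  \sum_(i < N) ((alpha i)^-1 * expR (- alpha i * cc i))%:E *
     (expeR ((alpha i)%:E * v i) * expeR (- (alpha i)%:E * phi i)).
Proof.
move=> a0 phifin vNy hs.
have termge0 i : 0 <= ((alpha i)^-1 * expR (- alpha i * cc i))%:E *
     (expeR ((alpha i)%:E * v i) * expeR (- (alpha i)%:E * phi i)).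
  by rewrite mule_ge0 ?mule_ge0 ?expeR_ge0 // lee_fin mulr_ge0 ?expR_ge0 // invr_ge0 ltW.
have [[j /eqP vj]|] := pselect (exists j, v j == +oo).
  rewrite [X in _ <= X](bigD1 j) //= vj.
  rewrite gt0_muley ?lte_fin //= gt0_mulye; last first.
    by apply: expeR_gt0; rewrite -(fineK (phifin j)) /= ltNyr.
  rewrite gt0_muley ?lte_fin ?mulr_gt0 ?expR_gt0 ?invr_gt0 //.
  rewrite addye ?leey //.
  rewrite gt_eqF // (lt_le_trans ltNy0) //.
  by apply: sume_ge0 => i _; exact: termge0.
move=> /forallNP nvy.
have vfin i : v i \is a fin_num.
  by rewrite fin_numE vNy /=; apply/negP => /eqP vi; apply: (nvy i); rewrite vi.
set r := fun i => fine (v i); set p := fun i => fine (phi i).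
have hs' : (\sum_(i < N) p i <= \sum_(i < N) r i)%R.
  have eP : \sum_(i < N) phi i = (\sum_(i < N) p i)%:E.
    by rewrite -sumEFin; apply: eq_bigr => i _; rewrite /p fineK.
  have eV : \sum_(i < N) v i = (\sum_(i < N) r i)%:E.
    by rewrite -sumEFin; apply: eq_bigr => i _; rewrite /r fineK.
  by rewrite -lee_fin -eP -eV.
have -> : \sum_(i < N) ((alpha i)^-1 * expR (- alpha i * cc i))%:E *
     (expeR ((alpha i)%:E * v i) * expeR (- (alpha i)%:E * phi i)) =
   (\sum_(i < N) ((alpha i)^-1 * expR (- alpha i * cc i) *
     (expR (alpha i * r i) * expR (- alpha i * p i))))%R%:E.
  rewrite -sumEFin; apply: eq_bigr => i _.
  by rewrite -(fineK (vfin i)) -(fineK (phifin i)) /=.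
rewrite lee_fin.
rewrite (@le_trans _ _ (\sum_(i < N) ((alpha i)^-1 - cc i + (r i - p i)))%R) //.
  rewrite big_split /= big_split /= sumrN.
  rewrite -[X in (X <= _)%R]addr0 lerD2l.
  by rewrite sumrB subr_ge0.
apply: ler_sum => i _.
rewrite -mulrA -!expRD.
have -> : (- alpha i * cc i + (alpha i * r i + - alpha i * p i) =
   alpha i * (r i - p i - cc i))%R.
  by rewrite !mulNr mulrBr mulrBr; lra.
have ai0 : (0 <= (alpha i)^-1)%R by rewrite invr_ge0 ltW.
apply: le_trans (ler_wpM2l ai0 (expR_ge1Dx _)).
rewrite mulrDr mulr1 mulrA mulVf ?gt_eqF // mul1r; lra.
Qed.
Theorem theorem2p1 (R : realType) (n N : nat)
  (c : N.-tuple (n.-tuple R) -> \bar R) (c_meas : measurable_fun setT c)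
  (alpha : 'I_N -> R) (alpha_gt0 : forall i, (0 < alpha i)%R)
  (m : 'I_N -> {measure set (n.-tuple R) -> \bar R})
  (V : 'I_N -> n.-tuple R -> \bar R)
  (V_meas : forall i, measurable_fun setT (V i))
  (V_adm : admissible c V)
  (Z_pos_fin : forall i, 0 < gibbs_mass (m i) (alpha i) (V i) < +oo)
  (nu : 'I_N -> probability (n.-tuple R) R)
  (nu_def : forall i (A : set (n.-tuple R)), measurable A ->
     nu i A = (\int[m i]_(x in A) expeR (- (alpha i)%:E * V i x))
              * ((fine (gibbs_mass (m i) (alpha i) (V i)))^-1)%:E)
  (gamma : probability (N.-tuple (n.-tuple R)) R)
  (Phi : 'I_N -> n.-tuple R -> \bar R)
  (KD : kantorovich_duality_with c nu gamma Phi) :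
  \prod_(i < N) (gibbs_mass (m i) (alpha i) (V i)) `^ (alpha i)^-1
  <= \prod_(i < N) (gibbs_mass (m i) (alpha i) (Phi i)) `^ (alpha i)^-1.
Proof.
case: KD => [[gmarg _] [[Padm1 Padm2] Pint] _ eqval finval].
case: V_adm => [Vadm1 Vadm2].
have Zfin i : gibbs_mass (m i) (alpha i) (V i) \is a fin_num.
  by case/andP: (Z_pos_fin i) => /ltW Z0 Zy; rewrite ge0_fin_numE.
set z := fun i => fine (gibbs_mass (m i) (alpha i) (V i)).
have z_gt0 i : (0 < z i)%R by apply: fine_gt0; exact: Z_pos_fin.
have Zz i : gibbs_mass (m i) (alpha i) (V i) = (z i)%:E by rewrite /z fineK.
have mPhi i : measurable_fun setT (Phi i) by case/integrableP: (Pint i).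
have me i : measurable_fun setT (fun x => expeR (- (alpha i)%:E * V i x)).
  by apply: measurableT_comp; [exact: measurable_expeR|exact: measurable_funeM].
set g := fun i x => expeR (- (alpha i)%:E * V i x) * ((z i)^-1)%:E.
have mg i : measurable_fun setT (g i).
  by apply: emeasurable_funM => //; exact: measurable_cst.
have g0 i x : 0 <= g i x by rewrite mule_ge0 ?expeR_ge0 // lee_fin invr_ge0 ltW.
have gfin i x : g i x \is a fin_num.
  rewrite /g; move: (Vadm1 i x); case: (V i x) => [r| |] //= _.
  by rewrite mulry ltr0_sg ?oppr_lt0 // mulN1e /= mul0e.
have nuE i A : measurable A -> nu i A = \int[m i]_(x in A) g i x.
  move=> mA; rewrite nu_def // /g ge0_integralZr //.
  - exact: measurable_funTS.
  - by move=> x _; exact: expeR_ge0.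
  - by rewrite lee_fin invr_ge0 ltW.
set F := fun i y => expeR ((alpha i)%:E * V i y) * expeR (- (alpha i)%:E * Phi i y).
have mF i : measurable_fun setT (F i).
  apply: emeasurable_funM; apply: measurableT_comp; try exact: measurable_expeR.
    exact: measurable_funeM.
  exact: measurable_funeM.
have F0 i y : 0 <= F i y by rewrite mule_ge0 ?expeR_ge0.
have AB i x : expeR ((alpha i)%:E * V i x) * expeR (- (alpha i)%:E * V i x) \is a fin_num /\
    expeR ((alpha i)%:E * V i x) * expeR (- (alpha i)%:E * V i x) <= 1.
  move: (Vadm1 i x); case: (V i x) => [r| |] //= _.
    rewrite -EFinM -expRD mulNr addrN expR0; split => //.
  rewrite gt0_muley ?lte_fin // lt0_muley ?lte_fin ?oppr_lt0 //= mule0; split => //.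
have intF i : \int[nu i]_y F i y <= gibbs_mass (m i) (alpha i) (Phi i) * ((z i)^-1)%:E.
  rewrite (@dens_change _ _ _ (m i) (nu i) (g i) (mg i) (g0 i) (gfin i) (nuE i) _ (mF i) (F0 i)).
  have mP : measurable_fun setT (fun x => expeR (- (alpha i)%:E * Phi i x)).
    by apply: measurableT_comp; [exact: measurable_expeR|exact: measurable_funeM].
  rewrite /gibbs_mass -ge0_integralZr //; last 2 first.
  - by move=> x _; exact: expeR_ge0.
  - by rewrite lee_fin invr_ge0 ltW.
  apply: ge0_le_integral => //.
  - by move=> x _; rewrite mule_ge0.
  - exact: emeasurable_funM.
  - by apply: emeasurable_funM => //; exact: measurable_cst.
  move=> x _; rewrite /F /g muleACA.
  have [ABf AB1] := AB i x.
  by apply: gee_pMl => //; rewrite mule_ge0 ?expeR_ge0 // lee_fin invr_ge0 ltW.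
have W_gt0 i : 0 < gibbs_mass (m i) (alpha i) (Phi i).
  have W0 : 0 <= gibbs_mass (m i) (alpha i) (Phi i).
    by apply: integral_ge0 => x _; exact: expeR_ge0.
  rewrite lt_neqAle W0 andbT; apply/negP => /eqP W00.
  have iF0 : \int[nu i]_y F i y = 0.
    apply/eqP; rewrite eq_le integral_ge0 ?andbT; last by move=> *; exact: F0.
    by have := intF i; rewrite -W00 mul0e.
  have aeF : ae_eq (nu i) setT (F i) (cst 0).
    apply/(ae_eq_integral_abs (nu i) measurableT (mF i)).
    by under eq_integral do rewrite gee0_abs //.
  have aeP := integrable_ae measurableT (Pint i).
  have : {ae nu i, forall x, False}.
    apply: filterS2 aeF aeP => x /(_ I) /= Fx /(_ I) Px.
    move: Fx; rewrite /F; apply/eqP; rewrite gt_eqF // mule_gt0 //; apply: expeR_gt0.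
      by move: (Vadm1 i x); case: (V i x) => [r| |] //= _; rewrite ?ltNyr // gt0_muley ?lte_fin.
    by rewrite -(fineK Px) /= ltNyr.
  case=> A [mA nuA sA].
  have : nu i setT <= nu i A by apply: le_measure; rewrite ?inE //; move=> x _; apply: sA => -[].
  by rewrite nuA probability_setT lee_fin ler10.
have aePhi : {ae gamma, forall x, forall i, Phi i (tnth x i) \is a fin_num}.
  apply: filter_forall => i.
  have := @marg_ae _ _ _ _ gamma (nu i) i (gmarg i) _ (integrable_ae measurableT (Pint i)).
  by apply: filterS => x /(_ I).
have aeS : {ae gamma, forall x, \sum_(i < N) Phi i (tnth x i) <= c x}.
  apply: ae_le_of_int => //.
  - by apply: integrable_sum => // i _; exact: (@marg_int _ _ _ _ gamma (nu i) i (gmarg i)).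
  rewrite eqval /dual_value integral_sum //; last first.
    by move=> i; exact: (@marg_int _ _ _ _ gamma (nu i) i (gmarg i)).
  by apply: eq_bigr => i _; rewrite (@marg_integral _ _ _ _ gamma (nu i) i (gmarg i)).
have star (cc : 'I_N -> R) :
   ((\sum_(i < N) (alpha i)^-1 - \sum_(i < N) cc i)%R)%:E <=
   \sum_(i < N) ((alpha i)^-1 * expR (- alpha i * cc i))%:E *
      (gibbs_mass (m i) (alpha i) (Phi i) * ((z i)^-1)%:E).
  set K := ((\sum_(i < N) (alpha i)^-1 - \sum_(i < N) cc i)%R).
  set a := fun i => ((alpha i)^-1 * expR (- alpha i * cc i))%R.
  have a0 i : (0 <= a i)%R by rewrite mulr_ge0 ?expR_ge0 // invr_ge0 ltW.
  set L := fun x : N.-tuple (n.-tuple R) => \sum_(i < N) (a i)%:E * F i (tnth x i).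
  have mL : measurable_fun setT L.
    apply: emeasurable_sum => i; apply: measurable_funeM.
    by apply: measurableT_comp => //; exact: measurable_tnth.
  have L0 x : 0 <= L x by apply: sume_ge0 => i _; rewrite mule_ge0 // lee_fin.
  have aeL : {ae gamma, forall x, K%:E <= L x}.
    apply: filterS2 aePhi aeS => x Pf Sc.
    apply: pointwise_ineq => //.
    by apply: le_trans Sc (Vadm2 x).
  have eL : \int[gamma]_x L x = \sum_(i < N) (a i)%:E * \int[nu i]_y F i y.
    rewrite /L ge0_integral_sum //; last 2 first.
    - move=> i; apply: measurable_funeM.
      by apply: measurableT_comp => //; exact: measurable_tnth.
    - by move=> i x _; rewrite mule_ge0 // lee_fin.
    apply: eq_bigr => i _; rewrite ge0_integralZl //; last 2 first.
    - by apply: measurableT_comp => //; exact: measurable_tnth.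
    - by rewrite lee_fin.
    by rewrite (@marg_ge0 _ _ _ _ gamma (nu i) i (gmarg i)).
  apply: le_trans (_ : K%:E <= \int[gamma]_x L x) _.
    have [K0|K0] := leP K 0%R.
      by apply: le_trans (integral_ge0 _ _); [rewrite lee_fin | move=> x _; exact: L0].
    rewrite -[X in X <= _]mule1 -(probability_setT gamma) -integral_cst //.
    apply: ae_ge0_le_integral => //.
    - by move=> x _; rewrite lee_fin ltW.
    by apply: filterS aeL => x Kx _.
  rewrite eL; apply: lee_sum => i _.
  by apply: lee_wpmul2l; [rewrite lee_fin | exact: intF].
have ainv0 i : ((alpha i)^-1 != 0)%R by rewrite invr_eq0 gt_eqF.
have [[j Wj]|nW] := pselect (exists j, gibbs_mass (m j) (alpha j) (Phi j) = +oo).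
  have pos i : 0 < gibbs_mass (m i) (alpha i) (Phi i) `^ (alpha i)^-1.
    move: (W_gt0 i); case: (gibbs_mass (m i) (alpha i) (Phi i)) => [r| |] //.
      by rewrite poweR_EFin !lte_fin => r0; rewrite powR_gt0.
    by move=> _ /=; rewrite (negbTE (ainv0 i)).
  rewrite [X in _ <= X](bigD1 j) //= Wj /= (negbTE (ainv0 j)) gt0_mulye ?leey //.
  by apply: (big_ind (fun x => 0 < x)) => // x y x0 y0; exact: mule_gt0.
have Wfin i : gibbs_mass (m i) (alpha i) (Phi i) \is a fin_num.
  rewrite ge0_fin_numE ?ltW ?W_gt0 // ltey; apply/eqP => Wi; apply: nW; by exists i.
set w := fun i => fine (gibbs_mass (m i) (alpha i) (Phi i)).
have w_gt0 i : (0 < w i)%R by apply: fine_gt0; rewrite W_gt0 /= -ge0_fin_numE ?ltW ?W_gt0.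
have Ww i : gibbs_mass (m i) (alpha i) (Phi i) = (w i)%:E by rewrite /w fineK.
have := star (fun i => (alpha i)^-1 * ln (w i / z i))%R.
have -> : \sum_(i < N) ((alpha i)^-1 * expR (- alpha i * ((alpha i)^-1 * ln (w i / z i))))%:E *
      (gibbs_mass (m i) (alpha i) (Phi i) * ((z i)^-1)%:E) =
   (\sum_(i < N) (alpha i)^-1)%R%:E.
  rewrite -sumEFin; apply: eq_bigr => i _.
  rewrite Ww /= -!EFinM; congr EFin.
  have wz0 : (0 < w i / z i)%R by rewrite divr_gt0.
  rewrite [(- alpha i * _)%R]mulrA mulNr mulrV ?unitfE ?gt_eqF // mulN1r expRN lnK ?posrE //.
  by field; rewrite !gt_eqF.
rewrite lee_fin => hcc.
have {}hcc : (0 <= \sum_(i < N) ((alpha i)^-1 * ln (w i / z i)))%R by lra.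
under eq_bigr => i _ do rewrite Zz poweR_EFin.
under [X in _ <= X]eq_bigr => i _ do rewrite Ww poweR_EFin.
rewrite !prodEFin lee_fin.
under eq_bigr => i _ do rewrite /powR gt_eqF //.
under [X in (_ <= X)%R]eq_bigr => i _ do rewrite /powR gt_eqF //.
rewrite -!expR_sum ler_expR -subr_ge0 -sumrB.
move: hcc; congr (_ <= _)%R; apply: eq_bigr => i _.
by rewrite ln_div ?posrE // mulrBr.
Qed.
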